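(* Let $\mathcal{C}=\{K_1,\dots,K_m\}$ be a covering of a finite set $E$. Let $A=\{A_1,\dots,A_s\}$ be the collection of all nonempty sets of the form $K_i-\bigcup_{j\neq i}K_j$ ($1\le i\le m$), and let $B=E-\bigcup_{i=1}^sA_i$. Then $\{A_1,\dots,A_s\}\cup\{\{x\}:x\in B\}$ is exactly the set of atoms of the lattice $\mathcal{L}(M(\mathcal{C}))$.
   Context: A covering of a finite set $E$ is a family of nonempty subsets of $E$ whose union is $E$. For a family $\mathcal{C}=\{K_1,\dots,K_m\}$ of subsets of $E$, a partial transversal is a set $\{e_1,\dots,e_k\}$ of distinct elements such that $e_j\in K_{i_j}$ for some distinct indices $i_1,\dots,i_k$; the transversal matroid $M(\mathcal{C})$ is the matroid on $E$ whose independent sets are the partial transversals of $\mathcal{C}$. For a matroid $M$ with rank function $r_M$, $cl_M(X)=\{a\in E:r_M(X\cup\{a\})=r_M(X)\}$; $X$ is closed if $cl_M(X)=X$. $\mathcal{L}(M)$ denotes the lattice of all closed sets of $M$ ordered by inclusion (meet is intersection, join is $cl_M$ of the union); its least element is $cl_M(\emptyset)$. An atom of a lattice with least element $0$ is an element covering $0$. *)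

(* Defs.v *)
(* The finite ground set E is modelled as a finType T
   (E = [set: T]); a family C = {K_1,...,K_m} is K : 'I_m -> {set T}. *)
From mathcomp Require Import all_boot.
Set Implicit Arguments. Unset Strict Implicit. Unset Printing Implicit Defensive.

Section Transversal.
Variables (T : finType) (m : nat) (K : 'I_m -> {set T}).

Definition covering : Prop :=
  (forall i, K i != set0) /\ \bigcup_(i < m) K i = [set: T].

Definition partial_transversal (X : {set T}) : bool :=
  [exists f : {ffun T -> 'I_m},
     [forall x in X, forall y in X, (f x == f y) ==> (x == y)] &&
     [forall e in X, e \in K (f e)]].

Definition tr_rank (X : {set T}) : nat :=
  \max_(Y in powerset X | partial_transversal Y) #|Y|.

Definition tr_cl (X : {set T}) : {set T} :=
  [set a | tr_rank (a |: X) == tr_rank X].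

Definition tr_closed (X : {set T}) : Prop := tr_cl X = X.

(* atoms of the lattice L(M(C)) of closed sets ordered by inclusion,
   whose least element is cl(emptyset) *)
Definition tr_atom (F : {set T}) : Prop :=
  tr_closed F /\ tr_cl set0 \proper F /\
  ~ (exists G, tr_closed G /\ tr_cl set0 \proper G /\ G \proper F).

Definition Aset : {set {set T}} :=
  [set K i :\: \bigcup_(j | j != i) K j | i : 'I_m] :\ set0.

Definition Bset : {set T} := ~: cover Aset.

End Transversal.

(* Main.v *)
Require Import Defs.
From mathcomp Require Import all_boot.
Set Implicit Arguments. Unset Strict Implicit. Unset Printing Implicit Defensive.

Section S.
Variables (T : finType) (m : nat) (K : 'I_m -> {set T}).
Hypothesis cov : covering K.

Definition U (i : 'I_m) := K i :\: \bigcup_(j | j != i) K j.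
Definition cls (x : T) : {set T} :=
  [set y | (y == x) || [exists i, (x \in U i) && (y \in U i)]].

Lemma inU x i : x \in U i -> forall j, x \in K j -> j = i.
Proof.
rewrite inE => /andP[/bigcupP nb _] j xj; apply/eqP; apply/negPn/negP => ji.
by apply: nb; exists j.
Qed.

Lemma UK x i : x \in U i -> x \in K i.
Proof. by rewrite inE => /andP[]. Qed.

Lemma exK x : exists i, x \in K i.
Proof.
have : x \in [set: T] by rewrite inE.
by rewrite -cov.2 => /bigcupP[i _ xi]; exists i.
Qed.

Lemma rk_le (X : {set T}) : tr_rank K X <= #|X|.
Proof.
apply/bigmax_leqP => Y; rewrite !inE => /andP[+ _].
exact: subset_leq_card.
Qed.

Lemma rk_ge (X Y : {set T}) : partial_transversal K Y -> Y \subset X -> #|Y| <= tr_rank K X.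
Proof. by move=> iY sYX; apply: leq_bigmax_cond; rewrite !inE sYX. Qed.

Lemma rk_mono (X Y : {set T}) : X \subset Y -> tr_rank K X <= tr_rank K Y.
Proof.
move=> sXY; apply/bigmax_leqP => Z; rewrite !inE => /andP[sZX iZ].
by apply: rk_ge => //; apply: subset_trans sXY.
Qed.

Lemma indep1 x : partial_transversal K [set x].
Proof.
have [i xi] := exK x.
apply/existsP; exists [ffun _ => i]; apply/andP; split.
  apply/forallP => y; apply/implyP; rewrite inE => /eqP->.
  apply/forallP => z; apply/implyP; rewrite inE => /eqP->.
  by apply/implyP.
by apply/forallP => y; apply/implyP; rewrite inE => /eqP->; rewrite ffunE.
Qed.

Lemma rk1 (X : {set T}) x : x \in X -> 1 <= tr_rank K X.
Proof. by move=> xX; rewrite -(cards1 x); apply: rk_ge (indep1 x) _; rewrite sub1set. Qed.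

Lemma cl0 : tr_cl K set0 = set0.
Proof.
apply/setP => a; rewrite !inE setU0.
have -> : tr_rank K set0 = 0.
  by apply/eqP; rewrite -leqn0; apply: leq_trans (rk_le _) _; rewrite cards0.
by apply/negbTE; rewrite -lt0n (rk1 (set11 a)).
Qed.


Lemma cls_U x y z : y \in cls x -> z \in cls x -> y != z ->
  exists i, (y \in U i) && (z \in U i).
Proof.
rewrite !inE => /orP[/eqP->|/existsP[i /andP[xi yi]]] /orP[/eqP->|/existsP[j /andP[xj zj]]].
- by rewrite eqxx.
- by move=> _; exists j; rewrite xj zj.
- by move=> _; exists i; rewrite xi yi.
- move=> _; exists i; rewrite yi; by rewrite (inU xi (UK xj)) in zj.
Qed.

Lemma K1 x Y : partial_transversal K Y -> Y \subset cls x -> #|Y| <= 1.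
Proof.
move=> /existsP[f /andP[/forallP inj /forallP mem]] sY.
apply/card_le1_eqP => y z yY zY.
case: (eqVneq y z) => // nyz; exfalso.
have [i /andP[yi zi]] := cls_U (subsetP sY y yY) (subsetP sY z zY) nyz.
have fy := inU yi (implyP (mem y) yY).
have fz := inU zi (implyP (mem z) zY).
move: (implyP (inj y) yY) => /forallP/(_ z)/implyP/(_ zY)/implyP.
by rewrite fy fz eqxx => /(_ isT); apply/negP.
Qed.

Lemma K2 x a : a \notin cls x -> partial_transversal K [set a; x].
Proof.
rewrite inE negb_or => /andP[nax nU].
have [/existsP[i /existsP[j /andP[/andP[nij ai] xj]]] | nex] :=
  boolP [exists i, exists j, (i != j) && (a \in K i) && (x \in K j)].
  apply/existsP; exists [ffun y => if y == a then i else j]; apply/andP; split.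
    apply/forallP => y; apply/implyP => yY; apply/forallP => z; apply/implyP => zY.
    apply/implyP; rewrite !ffunE.
    have nxa : (x == a) = false by rewrite eq_sym (negbTE nax).
    move: yY zY; rewrite !inE => /orP[]/eqP-> /orP[]/eqP->; rewrite ?eqxx ?nxa //.
    - by rewrite (negbTE nij).
    - by rewrite eq_sym (negbTE nij).
  apply/forallP => y; apply/implyP; rewrite !inE ffunE => /orP[]/eqP->.
    by rewrite eqxx.
  by rewrite eq_sym (negbTE nax).
exfalso; move/negP: nU; apply; apply/existsP.
have [i0 ai0] := exK a; have [j0 xj0] := exK x.
have key : forall i j, a \in K i -> x \in K j -> i = j.
  move=> i j ai xj; apply/eqP; apply/negPn/negP => nij; move/negP: nex; apply.
  by apply/existsP; exists i; apply/existsP; exists j; rewrite nij ai xj.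
have e := key _ _ ai0 xj0; subst j0.
exists i0; rewrite !inE ai0 xj0 !andbT; apply/andP; split; apply/negP => /bigcupP[j nj Kj].
- by move/negP: nj; apply; apply/eqP; symmetry; apply: key ai0 Kj.
- by move/negP: nj; apply; apply/eqP; apply: key Kj xj0.
Qed.


Lemma K3 x a (F : {set T}) : x \in F -> a \in cls x -> tr_rank K (a |: F) <= tr_rank K F.
Proof.
move=> xF acl; apply/bigmax_leqP => Y; rewrite !inE => /andP[sY iY].
have [aF|naF] := boolP (a \in F).
  by apply: rk_ge iY _; apply: subset_trans sY _; rewrite subUset sub1set aF subxx.
have [aY|naY] := boolP (a \in Y); last first.
  apply: rk_ge iY _; apply/subsetP => y yY; move: (subsetP sY y yY).
  by rewrite !inE => /orP[/eqP ya|//]; move: naY; rewrite -ya yY.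
have nax : a != x by apply: contraNneq naF => ->.
move: acl; rewrite inE (negbTE nax) /= => /existsP[i /andP[xi ai]].
case/existsP: iY => f /andP[/forallP inj /forallP mem].
have fa : f a = i := inU ai (implyP (mem a) aY).
have nxY : x \notin Y.
  apply/negP => xY; have fx : f x = i := inU xi (implyP (mem x) xY).
  move: (implyP (inj x) xY) => /forallP/(_ a)/implyP/(_ aY)/implyP.
  by rewrite fx fa eqxx => /(_ isT) /eqP xa; move: nax; rewrite xa eqxx.
pose Y' := x |: (Y :\ a).
have cY : #|Y| = #|Y'|.
  by rewrite /Y' cardsU1 (cardsD1 a Y) aY !inE negb_and nxY orbT.
rewrite cY; apply: rk_ge.
  apply/existsP; exists [ffun y => if y == x then i else f y]; apply/andP; split.
    apply/forallP => u; apply/implyP => uY; apply/forallP => v; apply/implyP => vY.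
    apply/implyP; rewrite !ffunE.
    move: uY vY; rewrite !inE => /orP[/eqP->|/andP[nua uY]] /orP[/eqP->|/andP[nva vY]];
      rewrite ?eqxx //.
    - have nvx : (v == x) = false by apply/negbTE; apply: contraNneq nxY => <-.
      rewrite nvx -fa => /eqP e.
      move: (implyP (inj v) vY) => /forallP/(_ a)/implyP/(_ aY)/implyP.
      by rewrite e eqxx => /(_ isT) /eqP va; move: nva; rewrite va eqxx.
    - have nux : (u == x) = false by apply/negbTE; apply: contraNneq nxY => <-.
      rewrite nux -fa => /eqP e.
      move: (implyP (inj u) uY) => /forallP/(_ a)/implyP/(_ aY)/implyP.
      by rewrite e eqxx => /(_ isT) /eqP ua; move: nua; rewrite ua eqxx.
    - have nvx : (v == x) = false by apply/negbTE; apply: contraNneq nxY => <-.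
      have nux : (u == x) = false by apply/negbTE; apply: contraNneq nxY => <-.
      rewrite nux nvx; move: (implyP (inj u) uY) => /forallP/(_ v)/implyP/(_ vY) /implyP; done.
  apply/forallP => y; apply/implyP; rewrite !inE ffunE => /orP[/eqP->|/andP[_ yY]].
    by rewrite eqxx (UK xi).
  have nyx : (y == x) = false by apply/negbTE; apply: contraNneq nxY => <-.
  by rewrite nyx (implyP (mem y) yY).
apply/subsetP => y; rewrite !inE => /orP[/eqP->//|/andP[nya yY]].
by move: (subsetP sY y yY); rewrite !inE (negbTE nya).
Qed.


Lemma set1U_id (a : T) (A : {set T}) : a \in A -> a |: A = A.
Proof. by move=> aA; apply/setP => y; rewrite !inE; case: eqP => // ->. Qed.

Lemma x_cls x : x \in cls x.
Proof. by rewrite inE eqxx. Qed.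

Lemma rk_cls x (X : {set T}) : X \subset cls x -> X != set0 -> tr_rank K X = 1.
Proof.
move=> sX /set0Pn[y yX]; apply/eqP; rewrite eqn_leq (rk1 yX) andbT.
apply/bigmax_leqP => Y; rewrite !inE => /andP[sY iY].
by apply: K1 iY (subset_trans sY sX).
Qed.

Lemma cls_closed x : tr_cl K (cls x) = cls x.
Proof.
apply/setP => a; rewrite inE.
have r1 : tr_rank K (cls x) = 1.
  by apply: rk_cls (subxx _) _; apply/set0Pn; exists x; apply: x_cls.
have [acl|nacl] := boolP (a \in cls x); first by rewrite set1U_id // eqxx.
rewrite r1; apply/negbTE; rewrite neq_ltn; apply/orP; right.
have nax : a != x by apply: contraNneq nacl => ->; apply: x_cls.
have := rk_ge (K2 nacl) (_ : [set a; x] \subset a |: cls x).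
rewrite cards2 nax; apply.
by apply/subsetP => y; rewrite !inE => /orP[->//|/eqP->]; rewrite eqxx !orbT.
Qed.

Lemma atom_iff F : tr_atom K F <-> exists x, F = cls x.
Proof.
rewrite /tr_atom /tr_closed cl0 !proper0; split.
  move=> [clF [/set0Pn[x xF] noG]]; exists x.
  have sub : cls x \subset F.
    apply/subsetP => a acl; rewrite -clF inE eqn_leq (K3 xF acl) /=.
    by apply: rk_mono; apply: subsetUr.
  apply/eqP; rewrite eq_sym eqEproper sub /=; apply/negP => pr; apply: noG.
  exists (cls x); rewrite cls_closed pr; split => //; split => //.
  by rewrite proper0; apply/set0Pn; exists x; apply: x_cls.
move=> [x ->]; split; first exact: cls_closed.
split; first by apply/set0Pn; exists x; apply: x_cls.
move=> [G [clG [+ pG]]]; rewrite proper0 => nG.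
have sGc := proper_sub pG.
have : cls x \subset G.
  apply/subsetP => a acl; rewrite -clG inE (rk_cls sGc nG) (@rk_cls x) //.
    by rewrite subUset sub1set acl sGc.
  by apply/set0Pn; exists a; rewrite !inE eqxx.
by move/(proper_sub_trans pG); rewrite properxx.
Qed.


Lemma cls_in x i : x \in U i -> cls x = U i.
Proof.
move=> xi; apply/setP => y; rewrite inE; apply/idP/idP.
  case/orP => [/eqP->//|/existsP[j /andP[xj yj]]].
  by rewrite -(inU xi (UK xj)).
by move=> yi; apply/orP; right; apply/existsP; exists i; rewrite xi yi.
Qed.

Lemma cls_out x : (forall i, x \notin U i) -> cls x = [set x].
Proof.
move=> nU; apply/setP => y; rewrite !inE; case: eqP => //= _.
by apply/negbTE/negP => /existsP[i /andP[xi _]]; move: (nU i); rewrite xi.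
Qed.

Lemma inB x : x \in Bset K -> forall i, x \notin U i.
Proof.
rewrite inE => nc i; apply/negP => xi; move/negP: nc; apply.
apply/bigcupP; exists (U i) => //; rewrite !inE; apply/andP; split.
  by apply/set0Pn; exists x.
by apply/imsetP; exists i.
Qed.

End S.

Theorem theorem2 (T : finType) (m : nat) (K : 'I_m -> {set T}) :
  covering K -> injective K ->
  forall F : {set T},
    tr_atom K F <-> (F \in Aset K \/ exists2 x, x \in Bset K & F = [set x]).
Proof.
move=> cov _ F; apply: iff_trans (atom_iff cov F) _; split.
  move=> [x ->].
  have [/existsP[i xi]|nex] := boolP [exists i, x \in U K i].
    left; rewrite (cls_in xi) !inE; apply/andP; split.
      by apply/set0Pn; exists x.
    by apply/imsetP; exists i.
  have nU : forall i, x \notin U K i.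
    by move=> i; apply/negP => xi; move/negP: nex; apply; apply/existsP; exists i.
  right; exists x; last exact: cls_out.
  rewrite inE; apply/negP => /bigcupP[B]; rewrite !inE => /andP[_ /imsetP[i _ ->]] xi.
  by move: (nU i); rewrite xi.
case=> [|[x xB ->]].
  rewrite !inE => /andP[/set0Pn[x xF] /imsetP[i _ eF]].
  exists x; rewrite eF in xF *; rewrite (cls_in xF) //.
by exists x; rewrite cls_out //; apply: inB.
Qed.
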